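(* For every $\alpha\in(0,1)$ there exists an $\alpha$-H\''older continuous function $\tilde f=\tilde f_\alpha:[0,1]\to\mathbb{R}$ such that $$\dim_A^\theta \operatorname{Graph}(\tilde f)=\dim_{A,reg}^\theta \operatorname{Graph}(\tilde f)=\frac{2-\alpha-\theta}{1-\theta}$$ for all $\theta\in(0,\alpha)$.
   Context: A function $g:[0,1]\to\mathbb{R}$ is $\alpha$-H\''older continuous if there is $C>0$ with $|g(t)-g(s)|\le C|t-s|^\alpha$ for all $t,s$. $\operatorname{Graph}(g)=\{(t,g(t)):t\in[0,1]\}$. For a bounded set $F\subset\mathbb{R}^2$ and $r>0$, $N(F,r)$ is the least number of sets of diameter at most $r$ needed to cover $F$; $D(\mathbf z,R)$ is the closed disc of radius $R$ centered at $\mathbf z$. For $E\subset\mathbb{R}^2$ and $\theta\in(0,1)$, the Assouad spectrum is $$\dim_A^\theta(E)=\inf\{\gamma>0:\ \exists C>0 \text{ s.t. } N(D(\mathbf z,R)\cap E,r)\le C(R/r)^\gamma \text{ for all } 0<r=R^{1/\theta}<R<1,\ \mathbf z\in E\},$$ and the regularized Assouad spectrum $\dim_{A,reg}^\theta(E)$ is defined identically except that the condition $r=R^{1/\theta}$ is replaced by $0<r\le R^{1/\theta}$ (equivalently, $\dim_{A,reg}^\theta(E)=\sup_{0<\theta'<\theta}\dim_A^{\theta'}(E)$). *)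

(* Defs.v *)
From Stdlib Require Import Reals Lra.
From Coquelicot Require Import Coquelicot.
Open Scope R_scope.

Definition pt := (R * R)%type.

Definition dist2 (p q : pt) : R :=
  sqrt ((fst p - fst q)^2 + (snd p - snd q)^2).

(* real power with the convention 0^a = 0 for a > 0 (Stdlib's Rpower 0 a = 1) *)
Definition rpow (x a : R) : R := if Rle_dec x 0 then 0 else Rpower x a.

Definition Holder (alpha : R) (g : R -> R) : Prop :=
  exists C, 0 < C /\ forall t s, 0 <= t <= 1 -> 0 <= s <= 1 ->
    Rabs (g t - g s) <= C * rpow (Rabs (t - s)) alpha.

Definition Graph (g : R -> R) : pt -> Prop :=
  fun p => exists t, 0 <= t <= 1 /\ p = (t, g t).

Definition diam_le (U : pt -> Prop) (r : R) : Prop :=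
  forall p q, U p -> U q -> dist2 p q <= r.

Definition covered_by (F : pt -> Prop) (r : R) (n : nat) : Prop :=
  exists U : nat -> pt -> Prop,
    (forall i, (i < n)%nat -> diam_le (U i) r) /\
    (forall p, F p -> exists i, (i < n)%nat /\ U i p).

Definition Ncov (F : pt -> Prop) (r : R) : Rbar :=
  Glb_Rbar (fun x => exists n : nat, x = INR n /\ covered_by F r n).

Definition Disc (z : pt) (Rad : R) : pt -> Prop := fun p => dist2 p z <= Rad.

Definition inter (A B : pt -> Prop) : pt -> Prop := fun p => A p /\ B p.

Definition assouad_spec (theta : R) (E : pt -> Prop) : Rbar :=
  Glb_Rbar (fun gamma => 0 < gamma /\ exists C, 0 < C /\
    forall (Rad r : R) (z : pt), 0 < r -> r = Rpower Rad (1 / theta) -> r < Rad -> Rad < 1 ->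
      E z ->
      Rbar_le (Ncov (inter (Disc z Rad) E) r) (Finite (C * Rpower (Rad / r) gamma))).

Definition assouad_spec_reg (theta : R) (E : pt -> Prop) : Rbar :=
  Glb_Rbar (fun gamma => 0 < gamma /\ exists C, 0 < C /\
    forall (Rad r : R) (z : pt), 0 < r -> r <= Rpower Rad (1 / theta) -> r < Rad -> Rad < 1 ->
      E z ->
      Rbar_le (Ncov (inter (Disc z Rad) E) r) (Finite (C * Rpower (Rad / r) gamma))).

(* Main.v *)
Require Import Defs.
From Stdlib Require Import Reals Lra Lia List ZArith IndefiniteDescription.
From Coquelicot Require Import Coquelicot.
Open Scope R_scope.

Lemma exp_le' x y : x <= y -> exp x <= exp y.
Proof. intros [H|H]; [left; apply exp_increasing; auto| subst; lra]. Qed.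

Lemma floor_nat x : 0 <= x -> exists n : nat, INR n <= x < INR n + 1.
Proof.
  intros Hx. destruct (base_Int_part x) as [H1 H2].
  assert (Hz : (0 <= Int_part x)%Z).
  { apply le_IZR. assert (IZR (Int_part x) > -1) by lra.
    destruct (Z_lt_le_dec (Int_part x) 0) as [Hl|Hl]; [|apply IZR_le in Hl; lra].
    assert (Int_part x <= -1)%Z by lia. apply IZR_le in H0. simpl in *. lra. }
  exists (Z.to_nat (Int_part x)). rewrite INR_IZR_INZ, Z2Nat.id by lia. lra.
Qed.

Lemma ceil_nat x : 0 <= x -> exists n : nat, x < INR n <= x + 1.
Proof.
  intros Hx. destruct (floor_nat x Hx) as [n Hn]. exists (S n). rewrite S_INR. lra.
Qed.

Definition saw (x : R) : R :=
  Rmin (x - IZR (Int_part x)) (IZR (Int_part x) + 1 - x).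

Lemma saw_le x (n : Z) : saw x <= Rabs (x - IZR n).
Proof.
  unfold saw. destruct (base_Int_part x) as [H1 H2].
  destruct (Z_le_gt_dec n (Int_part x)) as [H|H].
  - apply IZR_le in H. eapply Rle_trans; [apply Rmin_l|]. rewrite Rabs_right; lra.
  - assert (H' : (Int_part x + 1 <= n)%Z) by lia. apply IZR_le in H'.
    rewrite plus_IZR in H'. simpl in H'.
    eapply Rle_trans; [apply Rmin_r|]. rewrite Rabs_left1; lra.
Qed.

Lemma saw_att x : exists n : Z, saw x = Rabs (x - IZR n).
Proof.
  unfold saw. destruct (base_Int_part x) as [H1 H2].
  destruct (Rle_dec (x - IZR (Int_part x)) (IZR (Int_part x) + 1 - x)).
  - exists (Int_part x). rewrite Rmin_left by lra. rewrite Rabs_right; lra.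
  - exists (Int_part x + 1)%Z. rewrite Rmin_right by lra. rewrite plus_IZR. simpl.
    rewrite Rabs_left1; lra.
Qed.

Lemma saw_nonneg x : 0 <= saw x.
Proof. destruct (saw_att x) as [n ->]. apply Rabs_pos. Qed.

Lemma saw_half x : saw x <= 1/2.
Proof.
  unfold saw. destruct (base_Int_part x) as [H1 H2].
  destruct (Rle_dec (x - IZR (Int_part x)) (IZR (Int_part x) + 1 - x)).
  - rewrite Rmin_left by lra. lra.
  - rewrite Rmin_right by lra. lra.
Qed.

Lemma saw_lip x y : Rabs (saw x - saw y) <= Rabs (x - y).
Proof.
  destruct (saw_att x) as [n Hn]. destruct (saw_att y) as [m Hm].
  pose proof (saw_le x m). pose proof (saw_le y n).
  apply Rabs_le. split.
  - rewrite Hn in *. pose proof (Rabs_triang (x - y) (y - IZR n)).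
    replace (x - y + (y - IZR n)) with (x - IZR n) in H1 by ring.
    pose proof (Rabs_triang (y - x) (x - IZR n)) as H2.
    replace (y - x + (x - IZR n)) with (y - IZR n) in H2 by ring.
    rewrite (Rabs_minus_sym y x) in H2. lra.
  - rewrite Hm in *. pose proof (Rabs_triang (x - y) (y - IZR m)) as H2.
    replace (x - y + (y - IZR m)) with (x - IZR m) in H2 by ring. lra.
Qed.

Lemma saw_int_minus (n : Z) u : 0 <= u <= 1/2 -> saw (IZR n - u) = u.
Proof.
  intros Hu. apply Rle_antisym.
  - pose proof (saw_le (IZR n - u) n). rewrite Rabs_left1 in H by lra. lra.
  - destruct (saw_att (IZR n - u)) as [m ->].
    destruct (Z.eq_dec m n) as [->|Hne].
    + rewrite Rabs_left1; lra.
    + destruct (Z_lt_le_dec m n) as [Hl|Hl].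
      * assert (m + 1 <= n)%Z by lia. apply IZR_le in H. rewrite plus_IZR in H; simpl in H.
        rewrite Rabs_right; lra.
      * assert (n + 1 <= m)%Z by lia. apply IZR_le in H. rewrite plus_IZR in H; simpl in H.
        rewrite Rabs_left1; lra.
Qed.

Lemma saw_int (n : Z) : saw (IZR n) = 0.
Proof. replace (IZR n) with (IZR n - 0) by ring. apply saw_int_minus. lra. Qed.
Lemma Rpower_pos x a : 0 < Rpower x a.
Proof. unfold Rpower. apply exp_pos. Qed.

Lemma rpow_nonneg x a : 0 <= rpow x a.
Proof. unfold rpow. destruct Rle_dec; [lra| left; apply Rpower_pos]. Qed.

Lemma rpow_mono a b al : 0 < al -> a <= b -> rpow a al <= rpow b al.
Proof.
  intros Hal Hab. unfold rpow. destruct (Rle_dec a 0); destruct (Rle_dec b 0).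
  - lra.
  - left; apply Rpower_pos.
  - lra.
  - apply Rle_Rpower_l; lra.
Qed.

Lemma rpow_pos_eq x a : 0 < x -> rpow x a = Rpower x a.
Proof. intros. unfold rpow. destruct Rle_dec; lra. Qed.

Lemma piece_holder p al t s : 0 < p -> 0 < al < 1 ->
  Rabs (Rpower p al * saw (t / p) - Rpower p al * saw (s / p)) <= rpow (Rabs (t - s)) al.
Proof.
  intros Hp Hal.
  rewrite <- Rmult_minus_distr_l, Rabs_mult, (Rabs_right (Rpower p al)) by (left; apply Rpower_pos).
  destruct (Req_dec (Rabs (t - s)) 0) as [Hd|Hd].
  - assert (t = s). { destruct (Rcase_abs (t - s)); [rewrite Rabs_left in Hd|rewrite Rabs_right in Hd]; lra. }
    subst. replace (saw (s/p) - saw (s/p)) with 0 by ring. rewrite Rabs_R0, Rmult_0_r. apply rpow_nonneg.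
  - set (d := Rabs (t - s)) in *. assert (Hdp : 0 < d) by (pose proof (Rabs_pos (t - s)); unfold d in *; lra).
    rewrite rpow_pos_eq by auto.
    pose proof (saw_lip (t/p) (s/p)) as HL.
    replace (t/p - s/p) with ((t - s) / p) in HL by (field; lra).
    rewrite Rabs_div, (Rabs_right p) in HL by lra. fold d in HL.
    destruct (Rle_dec d p) as [Hle|Hgt].
    + eapply Rle_trans. apply Rmult_le_compat_l. left; apply Rpower_pos. exact HL.
      unfold Rpower.
      replace (exp (al * ln p) * (d / p)) with (exp ((al - 1) * ln p + ln d)).
      2:{ rewrite exp_plus, exp_ln by lra. replace ((al - 1) * ln p) with (al * ln p + - ln p) by ring.
          rewrite exp_plus, exp_Ropp, exp_ln by lra. field. lra. }
      apply exp_le'. assert (ln d <= ln p) by (apply ln_le; lra). nra.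
    + assert (Hs : Rabs (saw (t/p) - saw (s/p)) <= 1).
      { pose proof (saw_nonneg (t/p)); pose proof (saw_nonneg (s/p)); pose proof (saw_half (t/p)); pose proof (saw_half (s/p)).
        apply Rabs_le; lra. }
      eapply Rle_trans. apply Rmult_le_compat_l. left; apply Rpower_pos. exact Hs.
      rewrite Rmult_1_r. apply Rle_Rpower_l; lra.
Qed.
Definition Mk (k : nat) : nat := (k * (k + 1)) ^ k.
Definition Pk (k : nat) : R := / INR (Mk k).
Definition Q1 (k : nat) : nat := k ^ (k - 1) * (k + 1) ^ k.
Definition Q2 (k : nat) : nat := k ^ k * (k + 1) ^ (k - 1).

Lemma Mk_Q1 k : (1 <= k)%nat -> Mk k = (k * Q1 k)%nat.
Proof.
  intros Hk. destruct k as [|k']; [lia|]. unfold Mk, Q1.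
  rewrite Nat.pow_mul_l. replace (S k' - 1)%nat with k' by lia. simpl. lia.
Qed.

Lemma Mk_Q2 k : (1 <= k)%nat -> Mk k = ((k + 1) * Q2 k)%nat.
Proof.
  intros Hk. destruct k as [|k']; [lia|]. unfold Mk, Q2.
  rewrite Nat.pow_mul_l. replace (S k' - 1)%nat with k' by lia.
  replace (S k' + 1)%nat with (S (S k')) by lia. simpl. lia.
Qed.

Lemma Mk_pos k : (1 <= k)%nat -> 0 < INR (Mk k).
Proof. intros. apply lt_0_INR. unfold Mk. apply Nat.neq_0_lt_0, Nat.pow_nonzero. nia. Qed.

Lemma Pk_pos k : (1 <= k)%nat -> 0 < Pk k.
Proof. intros. unfold Pk. apply Rinv_0_lt_compat, Mk_pos; auto. Qed.

Lemma INR_Mk k : INR (Mk k) = (INR k * (INR k + 1)) ^ k.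
Proof. unfold Mk. rewrite pow_INR, mult_INR, plus_INR. simpl. ring. Qed.

Lemma INR_Zto_nat n : (0 <= n)%Z -> INR (Z.to_nat n) = IZR n.
Proof. intros. rewrite INR_IZR_INZ, Z2Nat.id; auto. Qed.

Definition idx (t : R) : nat := (Z.to_nat (up (/ t)) - 1)%nat.

Lemma idx_eq k t : (1 <= k)%nat -> / (INR k + 1) < t <= / INR k -> idx t = k.
Proof.
  intros Hk [H1 H2]. assert (Hk' : 1 <= INR k) by (apply (le_INR 1); auto).
  assert (Ht : 0 < t). { assert (0 < / (INR k + 1)) by (apply Rinv_0_lt_compat; lra). lra. }
  assert (A1 : INR k <= / t).
  { rewrite <- (Rinv_inv (INR k)). apply Rinv_le_contravar; auto. }
  assert (A2 : / t < INR k + 1).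
  { rewrite <- (Rinv_inv (INR k + 1)). apply Rinv_lt_contravar; auto.
    apply Rmult_lt_0_compat; [apply Rinv_0_lt_compat|]; lra. }
  assert (E : Z.of_nat (k + 1) = up (/ t)).
  { apply tech_up; rewrite <- INR_IZR_INZ, plus_INR; simpl; lra. }
  unfold idx. rewrite <- E, Nat2Z.id. lia.
Qed.

Lemma idx_spec t : 0 < t <= 1 ->
  (1 <= idx t)%nat /\ / (INR (idx t) + 1) < t <= / INR (idx t).
Proof.
  intros Ht. assert (Hi : 1 <= / t).
  { rewrite <- Rinv_1. apply Rinv_le_contravar; lra. }
  destruct (archimed (/ t)) as [A1 A2].
  set (n := up (/ t)) in *.
  assert (Hn : (2 <= n)%Z).
  { destruct (Z_lt_le_dec n 2) as [H|H]; auto. assert (n <= 1)%Z by lia.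
    apply IZR_le in H0. lra. }
  assert (E : INR (idx t) = IZR n - 1).
  { unfold idx. fold n. rewrite minus_INR. rewrite INR_Zto_nat by lia. simpl. ring.
    apply (INR_le 1). rewrite INR_Zto_nat by lia. apply IZR_le in Hn. simpl. lra. }
  assert (Hk : 1 <= INR (idx t)) by (rewrite E; apply IZR_le in Hn; lra).
  split; [apply INR_le; simpl; lra|]. rewrite E.
  split.
  - replace t with (/ / t) by (field; lra). apply Rinv_lt_contravar.
    + apply Rmult_lt_0_compat; lra.
    + lra.
  - replace t with (/ / t) at 1 by (field; lra). apply Rinv_le_contravar; lra.
Qed.

Lemma idx_anti t s : 0 < t <= 1 -> 0 < s <= 1 -> t < s -> (idx s <= idx t)%nat.
Proof.
  intros Ht Hs Hts. destruct (idx_spec t Ht) as [H1 [H2 H3]]. destruct (idx_spec s Hs) as [H4 [H5 H6]].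
  destruct (Nat.le_gt_cases (idx s) (idx t)) as [H|H]; auto.
  exfalso. assert (INR (idx t) + 1 <= INR (idx s)) by (rewrite <- S_INR; apply le_INR; lia).
  assert (/ INR (idx s) <= / (INR (idx t) + 1)).
  { apply Rinv_le_contravar; auto. apply (le_INR 1) in H1. simpl in H1. lra. }
  lra.
Qed.

Definition gp (al p t : R) : R := Rpower p al * saw (t / p).
Definition fA (al t : R) : R := if Rle_dec t 0 then 0 else gp al (Pk (idx t)) t.

Lemma gp_hi al k : (1 <= k)%nat -> gp al (Pk k) (/ INR k) = 0.
Proof.
  intros Hk. unfold gp. replace (/ INR k / Pk k) with (IZR (Z.of_nat (Q1 k))).
  - rewrite saw_int. ring.
  - rewrite <- INR_IZR_INZ. unfold Pk. rewrite (Mk_Q1 k Hk), mult_INR.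
    assert (0 < INR k) by (apply lt_0_INR; lia).
    assert (0 < INR (Q1 k)).
    { apply lt_0_INR. unfold Q1. apply Nat.neq_0_lt_0. apply Nat.neq_mul_0; split; apply Nat.pow_nonzero; lia. }
    field. lra.
Qed.

Lemma gp_lo al k : (1 <= k)%nat -> gp al (Pk k) (/ (INR k + 1)) = 0.
Proof.
  intros Hk. unfold gp. replace (/ (INR k + 1) / Pk k) with (IZR (Z.of_nat (Q2 k))).
  - rewrite saw_int. ring.
  - rewrite <- INR_IZR_INZ. unfold Pk. rewrite (Mk_Q2 k Hk), mult_INR, plus_INR.
    assert (0 < INR k) by (apply lt_0_INR; lia).
    assert (0 < INR (Q2 k)).
    { apply lt_0_INR. unfold Q2. apply Nat.neq_0_lt_0. apply Nat.neq_mul_0; split; apply Nat.pow_nonzero; lia. }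
    simpl. field. lra.
Qed.


Lemma fA_pos al t : 0 < t -> fA al t = gp al (Pk (idx t)) t.
Proof. intros. unfold fA. destruct Rle_dec; lra. Qed.

Lemma fA_hi al (Hal : 0 < al < 1) t : 0 < t <= 1 -> Rabs (fA al t) <= rpow (/ INR (idx t) - t) al.
Proof.
  intros Ht. destruct (idx_spec t Ht) as [H1 [H2 H3]]. rewrite fA_pos by lra.
  rewrite <- (Rminus_0_r (gp al _ t)). rewrite <- (gp_hi al (idx t) H1).
  eapply Rle_trans. apply piece_holder; auto. apply Pk_pos; auto.
  apply rpow_mono; [lra|]. rewrite Rabs_left1; lra.
Qed.

Lemma fA_lo al (Hal : 0 < al < 1) t : 0 < t <= 1 -> Rabs (fA al t) <= rpow (t - / (INR (idx t) + 1)) al.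
Proof.
  intros Ht. destruct (idx_spec t Ht) as [H1 [H2 H3]]. rewrite fA_pos by lra.
  rewrite <- (Rminus_0_r (gp al _ t)). rewrite <- (gp_lo al (idx t) H1).
  eapply Rle_trans. apply piece_holder; auto. apply Pk_pos; auto.
  apply rpow_mono; [lra|]. rewrite Rabs_right; lra.
Qed.

Lemma fA_holder_lt al (Hal : 0 < al < 1) t s : 0 <= t <= 1 -> 0 <= s <= 1 -> t < s ->
  Rabs (fA al t - fA al s) <= 2 * rpow (Rabs (t - s)) al.
Proof.
  intros Ht Hs Hts. rewrite (Rabs_left1 (t - s)) by lra.
  replace (- (t - s)) with (s - t) by ring.
  pose proof (rpow_nonneg (s - t) al).
  assert (Hs0 : 0 < s <= 1) by lra.
  destruct (Req_dec t 0) as [->|Ht0].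
  - unfold fA at 1. destruct Rle_dec; [|lra]. rewrite Rminus_0_l, Rabs_Ropp.
    eapply Rle_trans. apply fA_lo; auto. 
    assert (0 < / (INR (idx s) + 1)).
    { apply Rinv_0_lt_compat. pose proof (pos_INR (idx s)). lra. }
    pose proof (rpow_mono (s - / (INR (idx s) + 1)) (s - 0) al ltac:(lra) ltac:(lra)). lra.
  - assert (Ht' : 0 < t <= 1) by lra.
    destruct (Nat.eq_dec (idx t) (idx s)) as [E|E].
    + rewrite !fA_pos by lra. rewrite E.
      eapply Rle_trans. apply piece_holder; auto. apply Pk_pos. destruct (idx_spec s Hs0); auto.
      rewrite Rabs_left1 by lra. replace (- (t - s)) with (s - t) by ring. lra.
    + pose proof (idx_anti t s Ht' Hs0 Hts).
      destruct (idx_spec t Ht') as [H1 [H2 H3]]. destruct (idx_spec s Hs0) as [H4 [H5 H6]].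
      assert (INR (idx s) + 1 <= INR (idx t)) by (rewrite <- S_INR; apply le_INR; lia).
      assert (/ INR (idx t) <= / (INR (idx s) + 1)).
      { apply Rinv_le_contravar; auto. apply (le_INR 1) in H4. simpl in H4. lra. }
      eapply Rle_trans. apply Rabs_triang. rewrite Rabs_Ropp.
      pose proof (fA_hi al Hal t Ht'). pose proof (fA_lo al Hal s Hs0).
      pose proof (rpow_mono (/ INR (idx t) - t) (s - t) al ltac:(lra) ltac:(lra)).
      pose proof (rpow_mono (s - / (INR (idx s) + 1)) (s - t) al ltac:(lra) ltac:(lra)).
      lra.
Qed.

Lemma fA_holder al (Hal : 0 < al < 1) t s : 0 <= t <= 1 -> 0 <= s <= 1 ->
  Rabs (fA al t - fA al s) <= 2 * rpow (Rabs (t - s)) al.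
Proof.
  intros Ht Hs. destruct (Rtotal_order t s) as [H|[H|H]].
  - apply fA_holder_lt; auto.
  - subst. replace (fA al s - fA al s) with 0 by ring. rewrite Rabs_R0.
    pose proof (rpow_nonneg (Rabs (s - s)) al). lra.
  - rewrite Rabs_minus_sym, (Rabs_minus_sym t). apply fA_holder_lt; auto.
Qed.

Lemma dist2_le p q r : 0 <= r -> Rabs (fst p - fst q) <= r / 2 -> Rabs (snd p - snd q) <= r / 2 ->
  dist2 p q <= r.
Proof.
  intros Hr H1 H2. unfold dist2.
  rewrite <- (sqrt_Rsqr r Hr). apply sqrt_le_1_alt. unfold Rsqr.
  apply Rabs_le_between in H1. apply Rabs_le_between in H2. simpl. nra.
Qed.

Lemma dist2_ge_x p q : Rabs (fst p - fst q) <= dist2 p q.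
Proof.
  unfold dist2. rewrite <- sqrt_Rsqr_abs. apply sqrt_le_1_alt. unfold Rsqr. simpl.
  pose proof (pow2_ge_0 (snd p - snd q)). simpl in H. nra.
Qed.

Lemma dist2_ge_y p q : Rabs (snd p - snd q) <= dist2 p q.
Proof.
  unfold dist2. rewrite <- sqrt_Rsqr_abs. apply sqrt_le_1_alt. unfold Rsqr. simpl.
  pose proof (pow2_ge_0 (fst p - fst q)). simpl in H. nra.
Qed.

Definition clamp (c : R) : R := Rmax 0 (Rmin 1 c).

Lemma cover_upper (f : R -> R) (C al : R) :
  0 < C -> 0 < al < 1 ->
  (forall t s, 0 <= t <= 1 -> 0 <= s <= 1 -> Rabs (f t - f s) <= C * rpow (Rabs (t - s)) al) ->
  forall (Rad r : R) (z : pt), 0 < r -> r < Rad ->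
  exists n : nat, covered_by (inter (Disc z Rad) (Graph f)) r n /\
    INR n <= (4 * Rad / r + 1) * (4 * C * Rpower r al / r + 1).
Proof.
  intros HC Hal Hf Rad r z Hr HrR.
  set (w := r / 2). set (x0 := fst z - Rad). set (Hw := C * rpow w al).
  assert (Hw0 : 0 <= Hw) by (unfold Hw; pose proof (rpow_nonneg w al); nra).
  assert (HwR : Hw <= C * Rpower r al).
  { unfold Hw. rewrite <- (rpow_pos_eq r al) by lra. apply Rmult_le_compat_l; [lra|].
    apply rpow_mono; unfold w; lra. }
  destruct (ceil_nat (4 * Rad / r)) as [Ncol [HN1 HN2]].
  { apply Rlt_le, Rdiv_lt_0_compat; lra. }
  destruct (ceil_nat (4 * Hw / r)) as [M [HM1 HM2]].
  { apply Rmult_le_pos; [lra| left; apply Rinv_0_lt_compat; lra]. }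
  assert (HM0 : (0 < M)%nat).
  { apply INR_lt. simpl. assert (0 <= 4 * Hw / r) by (apply Rmult_le_pos; [lra| left; apply Rinv_0_lt_compat; lra]). lra. }
  set (yb := fun i : nat => f (clamp (x0 + INR i * w)) - Hw).
  exists (Ncol * M)%nat. split.
  - exists (fun (n : nat) (p : pt) => x0 + INR (n / M)%nat * w <= fst p <= x0 + (INR (n / M)%nat + 1) * w /\
                    yb (n / M)%nat + INR (n mod M)%nat * w <= snd p <= yb (n / M)%nat + (INR (n mod M)%nat + 1) * w).
    split.
    + intros i _ p q [Hp1 Hp2] [Hq1 Hq2]. apply dist2_le; [lra| |]; apply Rabs_le; unfold w in *; lra.
    + intros p [Hd [t [Ht ->]]]. simpl.
      pose proof (dist2_ge_x (t, f t) z) as Hx. unfold Disc in Hd. simpl in Hx.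
      assert (Hx' : Rabs (t - fst z) <= Rad) by lra. apply Rabs_le_between in Hx'.
      assert (Hw' : 0 < w) by (unfold w; lra).
      destruct (floor_nat ((t - x0) / w)) as [i [Hi1 Hi2]].
      { apply Rmult_le_pos; [unfold x0; lra| left; apply Rinv_0_lt_compat; lra]. }
      assert (Hi : (i < Ncol)%nat).
      { apply INR_lt. assert ((t - x0) / w <= 4 * Rad / r).
        { unfold x0, w. apply (Rmult_le_reg_r (r/2)); [lra|]. field_simplify; lra. }
        lra. }
      assert (Hti : x0 + INR i * w <= t < x0 + (INR i + 1) * w).
      { split.
        - apply (Rmult_le_compat_r w) in Hi1; [|lra]. field_simplify in Hi1; lra.
        - apply (Rmult_lt_compat_r w) in Hi2; [|lra]. field_simplify in Hi2; lra. }
      set (ci := clamp (x0 + INR i * w)).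
      assert (Hci : 0 <= ci <= 1 /\ Rabs (t - ci) <= w).
      { unfold ci, clamp. unfold Rmax, Rmin.
        destruct (Rle_dec 1 (x0 + INR i * w)); destruct Rle_dec; split; try split; try lra;
          apply Rabs_le; lra. }
      destruct Hci as [Hci1 Hci2].
      assert (Hft : Rabs (f t - f ci) <= Hw).
      { eapply Rle_trans. apply Hf; auto. unfold Hw. apply Rmult_le_compat_l; [lra|].
        apply rpow_mono; auto. lra. }
      apply Rabs_le_between in Hft.
      destruct (floor_nat ((f t - yb i) / w)) as [j [Hj1 Hj2]].
      { unfold yb. fold ci. apply Rmult_le_pos; [lra| left; apply Rinv_0_lt_compat; lra]. }
      assert (Hj : (j < M)%nat).
      { apply INR_lt. assert ((f t - yb i) / w <= 4 * Hw / r).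
        { unfold yb. fold ci. unfold w. apply (Rmult_le_reg_r (r/2)); [lra|]. field_simplify; lra. }
        lra. }
      exists (i * M + j)%nat. split; [nia|].
      assert (E1 : ((i * M + j) / M = i)%nat).
      { rewrite Nat.div_add_l by lia. rewrite Nat.div_small by lia. lia. }
      assert (E2 : ((i * M + j) mod M = j)%nat).
      { rewrite Nat.add_comm, Nat.Div0.mod_add. apply Nat.mod_small; lia. }
      rewrite E1, E2. simpl. split; [lra|].
      split.
      * apply (Rmult_le_compat_r w) in Hj1; [|lra]. field_simplify in Hj1; lra.
      * apply (Rmult_lt_compat_r w) in Hj2; [|lra]. field_simplify in Hj2; lra.
  - rewrite mult_INR. apply Rmult_le_compat; try lra.
    + apply pos_INR.
    + apply pos_INR.
    + assert (4 * Hw / r <= 4 * C * Rpower r al / r).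
      { unfold Rdiv. apply Rmult_le_compat_r; [left; apply Rinv_0_lt_compat; lra|]. lra. }
      lra.
Qed.
Lemma Ncov_le F r n : covered_by F r n -> Rbar_le (Ncov F r) (INR n).
Proof.
  intros H. unfold Ncov. destruct (Glb_Rbar_correct (fun x => exists n : nat, x = INR n /\ covered_by F r n)) as [H1 _].
  apply H1. exists n; auto.
Qed.

Lemma pigeon (P : nat -> nat -> Prop) Mp n :
  (forall q, (q < Mp)%nat -> exists i, (i < n)%nat /\ P q i) ->
  (forall q q' i, (q < Mp)%nat -> (q' < Mp)%nat -> (i < n)%nat -> P q i -> P q' i -> q = q') ->
  (Mp <= n)%nat.
Proof.
  intros H1 H2.
  assert (H : forall q, exists i, (q < Mp)%nat -> (i < n)%nat /\ P q i).
  { intros q. destruct (Nat.lt_ge_cases q Mp) as [Hq|Hq].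
    - destruct (H1 q Hq) as [i Hi]. exists i; auto.
    - exists O. intros; lia. }
  set (g := fun q => proj1_sig (constructive_indefinite_description _ (H q))).
  assert (Hg : forall q, (q < Mp)%nat -> (g q < n)%nat /\ P q (g q)).
  { intros q. unfold g. destruct constructive_indefinite_description; simpl; auto. }
  assert (L1 : length (map g (seq 0 Mp)) = Mp) by (rewrite length_map, length_seq; auto).
  assert (L2 : length (seq 0 n) = n) by (rewrite length_seq; auto).
  rewrite <- L1, <- L2 at 1.
  apply NoDup_incl_length.
  - apply NoDup_map_NoDup_ForallPairs; [|apply seq_NoDup].
    intros a b Ha Hb E. apply in_seq in Ha. apply in_seq in Hb.
    destruct (Hg a) as [Ha' Pa]; [lia|]. destruct (Hg b) as [_ Pb]; [lia|].
    rewrite E in Pa, Ha'. eapply H2; eauto; lia.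
  - intros y Hy. apply in_map_iff in Hy. destruct Hy as [q [<- Hq]]. apply in_seq in Hq.
    apply in_seq. destruct (Hg q) as [Hq' _]; [lia|]. lia.
Qed.

Lemma Ncov_ge F r (x : nat -> pt) Mp :
  (forall q, (q < Mp)%nat -> F (x q)) ->
  (forall q q', (q < Mp)%nat -> (q' < Mp)%nat -> q <> q' -> r < dist2 (x q) (x q')) ->
  Rbar_le (INR Mp) (Ncov F r).
Proof.
  intros HF Hsep. unfold Ncov.
  destruct (Glb_Rbar_correct (fun x => exists n : nat, x = INR n /\ covered_by F r n)) as [_ H2].
  apply H2. intros y [n [-> [U [HU1 HU2]]]]. simpl. apply le_INR.
  apply (pigeon (fun q i => U i (x q)) Mp n).
  - intros q Hq. apply HU2, HF; auto.
  - intros q q' i Hq Hq' Hi P1 P2. destruct (Nat.eq_dec q q') as [|Hne]; auto.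
    exfalso. specialize (Hsep q q' Hq Hq' Hne).
    specialize (HU1 i Hi _ _ P1 P2). lra.
Qed.
Lemma ln_div' a b : 0 < a -> 0 < b -> ln (a / b) = ln a - ln b.
Proof. intros. unfold Rdiv. rewrite ln_mult, ln_Rinv; try lra. apply Rinv_0_lt_compat; auto. Qed.

Definition g0 (al th : R) : R := (2 - al - th) / (1 - th).

Lemma Rpower_div_r r al : 0 < r -> Rpower r al / r = Rpower r (al - 1).
Proof.
  intros. unfold Rpower. replace ((al - 1) * ln r) with (al * ln r + - ln r) by ring.
  rewrite exp_plus, exp_Ropp, exp_ln by lra. field. lra.
Qed.

Lemma Rpower_ge1 r e : 0 < r < 1 -> e <= 0 -> 1 <= Rpower r e.
Proof.
  intros Hr He. unfold Rpower. rewrite <- exp_0. apply exp_le'.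
  assert (ln r < 0). { rewrite <- ln_1. apply ln_increasing; lra. } nra.
Qed.

Lemma upper_exp al th Rad r : 0 < th < 1 -> 0 < al < 1 -> 0 < r -> r < Rad ->
  r <= Rpower Rad (1 / th) ->
  (Rad / r) * Rpower r (al - 1) <= Rpower (Rad / r) (g0 al th).
Proof.
  intros Hth Hal Hr HrR Hle.
  assert (HR : 0 < Rad) by lra.
  assert (Hb : th * ln r <= ln Rad).
  { apply ln_le in Hle; auto. unfold Rpower in Hle. rewrite ln_exp in Hle.
    apply (Rmult_le_compat_l th) in Hle; [|lra]. field_simplify in Hle; lra. }
  unfold Rpower. rewrite ln_div' by lra.
  replace (Rad / r) with (exp (ln Rad - ln r)) at 1 by (rewrite <- ln_div' by lra; apply exp_ln, Rdiv_lt_0_compat; lra).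
  rewrite <- exp_plus. apply exp_le'.
  unfold g0.
  assert (E : ln Rad - ln r + (al - 1) * ln r - (2 - al - th) / (1 - th) * (ln Rad - ln r)
              = (al - 1) / (1 - th) * (ln Rad - th * ln r)) by (field; lra).
  assert ((al - 1) / (1 - th) * (ln Rad - th * ln r) <= 0).
  { assert (Hq : (al - 1) / (1 - th) < 0).
    { unfold Rdiv. assert (0 < / (1 - th)) by (apply Rinv_0_lt_compat; lra). nra. }
    nra. }
  lra.
Qed.
Lemma g0_pos al th : 0 < al < 1 -> 0 < th < al -> 0 < g0 al th.
Proof. intros. unfold g0. apply Rdiv_lt_0_compat; lra. Qed.

Lemma reg_bound al th : 0 < al < 1 -> 0 < th < 1 ->
  forall (Rad r : R) (z : pt), 0 < r -> r <= Rpower Rad (1 / th) -> r < Rad -> Rad < 1 ->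
  Rbar_le (Ncov (inter (Disc z Rad) (Graph (fA al))) r) (Finite (45 * Rpower (Rad / r) (g0 al th))).
Proof.
  intros Hal Hth Rad r z Hr Hle HrR HR1.
  destruct (cover_upper (fA al) 2 al ltac:(lra) Hal (fun t s Ht Hs => fA_holder al Hal t s Ht Hs) Rad r z Hr HrR)
    as [n [Hcov Hn]].
  eapply Rbar_le_trans. apply Ncov_le, Hcov. simpl.
  replace (4 * 2 * Rpower r al / r) with (2 * 4 * Rpower r (al - 1)) in Hn
    by (rewrite <- Rpower_div_r by lra; field; lra).
  pose proof (upper_exp al th Rad r Hth Hal Hr HrR Hle) as HU.
  pose proof (Rpower_ge1 r (al - 1) ltac:(lra) ltac:(lra)) as H1.
  assert (HRr : 1 < Rad / r) by (apply (Rmult_lt_reg_r r); [lra|]; field_simplify; lra).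
  set (X := Rad / r) in *. set (Y := Rpower r (al - 1)) in *.
  assert (4 * X + 1 <= 5 * X) by lra.
  assert (2 * 4 * Y + 1 <= 9 * Y) by lra.
  assert (Hp : (4 * X + 1) * (2 * 4 * Y + 1) <= (5 * X) * (9 * Y)) by (apply Rmult_le_compat; lra).
  replace (4 * Rad / r) with (4 * X) in Hn by (unfold X; field; lra).
  nra.
Qed.
Lemma small_pow e B : e < 0 -> 0 < B -> exists d, 0 < d /\ forall p, 0 < p -> p <= d -> B <= Rpower p e.
Proof.
  intros He HB. exists (exp (ln B / e)). split; [apply exp_pos|].
  intros p Hp Hd. apply ln_le in Hd; auto. rewrite ln_exp in Hd.
  unfold Rpower. rewrite <- (exp_ln B) at 1 by auto. apply exp_le'.
  apply (Rmult_le_compat_neg_l e) in Hd; [|lra].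
  replace (e * (ln B / e)) with (ln B) in Hd by (field; lra). lra.
Qed.

Lemma Mk_ge k : (1 <= k)%nat -> 2 * INR k <= INR (Mk k).
Proof.
  intros Hk. rewrite (Mk_Q1 k Hk), mult_INR. unfold Q1.
  assert (H1 : (1 <= k ^ (k - 1))%nat) by (apply Nat.neq_0_lt_0, Nat.pow_nonzero; lia).
  assert (H2 : (2 <= (k + 1) ^ k)%nat).
  { destruct k as [|k']; [lia|]. replace (S k' + 1)%nat with (S (S k')) by lia.
    rewrite Nat.pow_succ_r'.
    assert (1 <= (S (S k')) ^ k')%nat by (apply Nat.neq_0_lt_0, Nat.pow_nonzero; lia). nia. }
  assert (2 <= INR (k ^ (k - 1) * (k + 1) ^ k)) by (apply (le_INR 2); nia).
  pose proof (pos_INR k). nra.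
Qed.

Lemma Pk_le k : (1 <= k)%nat -> Pk k <= / (2 * INR k).
Proof.
  intros Hk. unfold Pk. assert (0 < INR k) by (apply lt_0_INR; lia).
  apply Rinv_le_contravar; [lra|]. apply Mk_ge; auto.
Qed.

Lemma block_R k th : (1 <= k)%nat -> 0 < th -> 1 <= th * INR k ->
  Rpower (Pk k) th <= / (INR k * (INR k + 1)).
Proof.
  intros Hk Hth Hthk. assert (Hk1 : 1 <= INR k) by (apply (le_INR 1) in Hk; simpl in Hk; lra).
  set (B := INR k * (INR k + 1)).
  assert (HB : 2 <= B) by (unfold B; nra).
  assert (HlnB : 0 < ln B) by (rewrite <- ln_1; apply ln_increasing; lra).
  unfold Pk. rewrite INR_Mk. fold B. unfold Rpower.
  rewrite ln_Rinv by (apply pow_lt; lra). rewrite ln_pow by lra.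
  rewrite <- (exp_ln (/ B)) by (apply Rinv_0_lt_compat; lra).
  apply exp_le'. rewrite ln_Rinv by lra. nra.
Qed.
Lemma hi_div k : (1 <= k)%nat -> / INR k / Pk k = INR (Q1 k).
Proof.
  intros Hk. unfold Pk. rewrite (Mk_Q1 k Hk), mult_INR.
  assert (0 < INR k) by (apply lt_0_INR; lia).
  assert (0 < INR (Q1 k)).
  { apply lt_0_INR. unfold Q1. apply Nat.neq_0_lt_0. apply Nat.neq_mul_0; split; apply Nat.pow_nonzero; lia. }
  field. lra.
Qed.

Lemma Rpower_mul p a b : Rpower p a * Rpower p b = Rpower p (a + b).
Proof. rewrite Rpower_plus. auto. Qed.

Lemma nat_sep a b : a <> b -> INR a + 1 <= INR b \/ INR b + 1 <= INR a.
Proof.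
  intros H. destruct (Nat.lt_gt_cases a b) as [H0 _]. destruct (H0 H) as [H1|H1].
  - left. rewrite <- S_INR. apply le_INR. lia.
  - right. rewrite <- S_INR. apply le_INR. lia.
Qed.

Lemma lower al th ga C : 0 < al < 1 -> 0 < th < al -> ga < g0 al th -> 0 < C ->
  (forall (Rad r : R) (z : pt), 0 < r -> r = Rpower Rad (1 / th) -> r < Rad -> Rad < 1 ->
      Graph (fA al) z ->
      Rbar_le (Ncov (inter (Disc z Rad) (Graph (fA al))) r) (Finite (C * Rpower (Rad / r) ga))) ->
  False.
Proof.
  intros Hal Hth Hga HC H.
  destruct (small_pow (th - 1) 8 ltac:(lra) ltac:(lra)) as [d1 [Hd1 P1]].
  destruct (small_pow (al - 1) 8 ltac:(lra) ltac:(lra)) as [d2 [Hd2 P2]].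
  destruct (small_pow (th - al) 2 ltac:(lra) ltac:(lra)) as [d3 [Hd3 P3]].
  destruct (small_pow ((th - 1) * (g0 al th - ga)) (64 * C + 1) ltac:(nra) ltac:(lra)) as [d4 [Hd4 P4]].
  set (d := Rmin (Rmin d1 d2) (Rmin d3 d4)).
  assert (Hd : 0 < d) by (unfold d; repeat apply Rmin_glb_lt; auto).
  assert (Hdd : d <= d1 /\ d <= d2 /\ d <= d3 /\ d <= d4).
  { unfold d. repeat split.
    - eapply Rle_trans; [apply Rmin_l|apply Rmin_l].
    - eapply Rle_trans; [apply Rmin_l|apply Rmin_r].
    - eapply Rle_trans; [apply Rmin_r|apply Rmin_l].
    - eapply Rle_trans; [apply Rmin_r|apply Rmin_r]. }
  destruct (ceil_nat (/ d + / th)) as [k [Hk1 _]].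
  { assert (0 < / d) by (apply Rinv_0_lt_compat; lra). assert (0 < / th) by (apply Rinv_0_lt_compat; lra). lra. }
  assert (Hid : 0 < / d) by (apply Rinv_0_lt_compat; lra).
  assert (Hith : 0 < / th) by (apply Rinv_0_lt_compat; lra).
  assert (Hk : (1 <= k)%nat).
  { destruct k; [simpl in Hk1; lra| lia]. }
  assert (HkR : 1 <= INR k) by (apply (le_INR 1) in Hk; simpl in Hk; lra).
  assert (Hthk : 1 <= th * INR k).
  { assert (/ th < INR k) by lra. apply (Rmult_lt_compat_l th) in H0; [|lra].
    rewrite Rinv_r in H0; lra. }
  set (p := Pk k).
  assert (Hp0 : 0 < p) by (apply Pk_pos; auto).
  assert (Hpk : p <= / (2 * INR k)) by (apply Pk_le; auto).
  assert (Hpk' : / (2 * INR k) <= / INR k) by (apply Rinv_le_contravar; lra).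
  assert (Hpd : p <= d).
  { assert (/ INR k < d).
    { rewrite <- (Rinv_inv d). apply Rinv_lt_contravar; [apply Rmult_lt_0_compat; lra| lra]. }
    lra. }
  assert (Hp1 : p < 1).
  { assert (/ (2 * INR k) <= / 2) by (apply Rinv_le_contravar; lra). lra. }
  specialize (P1 p Hp0 ltac:(lra)). specialize (P2 p Hp0 ltac:(lra)).
  specialize (P3 p Hp0 ltac:(lra)). specialize (P4 p Hp0 ltac:(lra)).
  set (Rad := Rpower p th).
  assert (HRp : Rad / p = Rpower p (th - 1)) by (apply Rpower_div_r; auto).
  assert (HR0 : 0 < Rad) by apply Rpower_pos.
  assert (HR8 : 8 * p <= Rad).
  { assert (8 <= Rad / p) by lra. apply (Rmult_le_compat_r p) in H0; [|lra].
    field_simplify in H0; lra. }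
  set (Y := Rpower p (al - 1)).
  assert (HY0 : 0 < Y) by apply Rpower_pos.
  assert (P2' : 8 <= Y) by exact P2. clear P2.
  assert (HYp : Y * p = Rpower p al).
  { unfold Y. rewrite <- (Rpower_1 p) at 2 by auto. rewrite Rpower_mul. f_equal. ring. }
  assert (HYi : Y * Rpower p (1 - al) = 1).
  { unfold Y. rewrite Rpower_mul. replace (al - 1 + (1 - al)) with 0 by ring. apply Rpower_O; auto. }
  assert (Hpal : Rpower p al <= Rad / 2).
  { assert (E : Rpower p al * Rpower p (th - al) = Rad) by (rewrite Rpower_mul; unfold Rad; f_equal; ring).
    assert (0 < Rpower p al) by apply Rpower_pos. nra. }
  assert (Hblock : Rad <= / (INR k * (INR k + 1))) by (apply block_R; auto; lra).
  assert (Hgap : / INR k - / (INR k + 1) = / (INR k * (INR k + 1))) by (field; lra).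
  assert (Hk2 : 0 < / (INR k + 1)) by (apply Rinv_0_lt_compat; lra).
  destruct (floor_nat (Rad / (4 * p))) as [J [HJ1 HJ2]].
  { apply Rlt_le, Rdiv_lt_0_compat; lra. }
  destruct (floor_nat (Y / 4)) as [K [HK1 HK2]]. { lra. }
  assert (HRJ : Rad / (4 * p) = (Rad / p) / 4) by (field; lra).
  assert (HK0 : (K <> 0)%nat).
  { assert (HK1' : 1 < INR K) by lra. intros E. rewrite E in HK1'. simpl in HK1'. lra. }
  assert (HJp : 2 * INR J * p <= Rad / 2).
  { apply (Rmult_le_compat_r (2 * p)) in HJ1; [|lra]. 
    replace (Rad / (4 * p) * (2 * p)) with (Rad / 2) in HJ1 by (field; lra). lra. }
  assert (HKp : 2 * INR K * p <= Rpower p al / 2).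
  { apply (Rmult_le_compat_r (2 * p)) in HK1; [|lra]. lra. }
  set (jq := fun q : nat => (q / K)%nat).
  set (mq := fun q : nat => (q mod K)%nat).
  set (uq := fun q : nat => 2 * (INR (mq q) + 1) * Rpower p (1 - al)).
  set (tq := fun q : nat => / INR k - 2 * INR (jq q) * p - uq q * p).
  set (x := fun q : nat => (tq q, fA al (tq q))).
  assert (Hpt : forall q, (q < J * K)%nat ->
     (jq q < J)%nat /\ (mq q < K)%nat /\ 0 < uq q <= 1 / 2 /\
     0 <= / INR k - tq q <= Rad / 2 /\ / (INR k + 1) < tq q <= / INR k /\
     fA al (tq q) = 2 * (INR (mq q) + 1) * p).
  { intros q Hq.
    assert (Hj : (jq q < J)%nat).
    { unfold jq. apply Nat.Div0.div_lt_upper_bound. lia. }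
    assert (Hm : (mq q < K)%nat) by (unfold mq; apply Nat.mod_upper_bound; auto).
    assert (HmR : INR (mq q) + 1 <= INR K) by (rewrite <- S_INR; apply le_INR; lia).
    assert (HjR : INR (jq q) + 1 <= INR J) by (rewrite <- S_INR; apply le_INR; lia).
    assert (Hpa : 0 < Rpower p (1 - al)) by apply Rpower_pos.
    assert (Hu : 0 < uq q <= 1 / 2).
    { unfold uq. split.
      - pose proof (pos_INR (mq q)). nra.
      - assert (2 * (INR (mq q) + 1) * Rpower p (1 - al) <= 2 * INR K * Rpower p (1 - al)) by nra.
        assert (2 * INR K * Rpower p (1 - al) <= 2 * (Y / 4) * Rpower p (1 - al)) by nra.
        nra. }
    assert (Hd0 : 0 <= / INR k - tq q <= Rad / 2).
    { unfold tq. pose proof (pos_INR (jq q)).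
      assert (2 * INR (jq q) * p + p <= 2 * INR J * p) by nra. split; nra. }
    assert (Hblk : / (INR k + 1) < tq q <= / INR k) by lra.
    do 5 (split; auto).
    assert (Hidx : idx (tq q) = k) by (apply idx_eq; auto).
    rewrite fA_pos by lra. rewrite Hidx. fold p. unfold gp.
    replace (tq q / p) with (IZR (Z.of_nat (Q1 k) - 2 * Z.of_nat (jq q)) - uq q).
    2:{ rewrite minus_IZR, mult_IZR, <- !INR_IZR_INZ. rewrite <- (hi_div k Hk). fold p.
        unfold tq. simpl. field. lra. }
    rewrite saw_int_minus by lra. unfold uq.
    replace (Rpower p al * (2 * (INR (mq q) + 1) * Rpower p (1 - al)))
      with (2 * (INR (mq q) + 1) * (Rpower p al * Rpower p (1 - al))) by ring.
    rewrite Rpower_mul. replace (al + (1 - al)) with 1 by ring. rewrite Rpower_1; auto. }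
  assert (Hz0 : fA al (/ INR k) = 0).
  { rewrite fA_pos by (apply Rinv_0_lt_compat; lra).
    rewrite (idx_eq k) by (first [exact Hk | split; [apply Rinv_lt_contravar; nra| lra]]). apply gp_hi; auto. }
  set (z := (/ INR k, fA al (/ INR k))).
  assert (Hin : 0 < / INR k <= 1).
  { split; [apply Rinv_0_lt_compat; lra|]. rewrite <- Rinv_1. apply Rinv_le_contravar; lra. }
  assert (HNge : Rbar_le (INR (J * K)) (Ncov (inter (Disc z Rad) (Graph (fA al))) p)).
  { apply (Ncov_ge _ _ x).
    - intros q Hq. destruct (Hpt q Hq) as [_ [_ [_ [Hd0 [Hblk Hf]]]]].
      split.
      + unfold Disc. apply dist2_le; [lra| |]; unfold x, z; simpl.
        * rewrite Rabs_left1; lra.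
        * rewrite Hz0, Hf, Rminus_0_r. rewrite Rabs_right.
          -- assert (HmR : INR (mq q) + 1 <= INR K).
             { rewrite <- S_INR; apply le_INR. destruct (Hpt q Hq) as [_ [Hm _]]. lia. }
             nra.
          -- pose proof (pos_INR (mq q)). nra.
      + exists (tq q). split; [lra|]. auto.
    - intros q q' Hq Hq' Hne.
      destruct (Hpt q Hq) as [Hj [Hm [Hu [Hd0 [Hblk Hf]]]]].
      destruct (Hpt q' Hq') as [Hj' [Hm' [Hu' [Hd0' [Hblk' Hf']]]]].
      destruct (Nat.eq_dec (jq q) (jq q')) as [Ej|Ej].
      + assert (Em : mq q <> mq q').
        { intros Em. apply Hne. rewrite (Nat.div_mod q K HK0), (Nat.div_mod q' K HK0).
          unfold jq, mq in Ej, Em. rewrite Ej, Em. auto. }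
        eapply Rlt_le_trans; [|apply dist2_ge_y]. unfold x; simpl. rewrite Hf, Hf'.
        destruct (nat_sep _ _ Em) as [S|S].
        * rewrite Rabs_left1 by nra. nra.
        * rewrite Rabs_right by nra. nra.
      + eapply Rlt_le_trans; [|apply dist2_ge_x]. unfold x; simpl.
        unfold tq. destruct (nat_sep _ _ Ej) as [S|S].
        * rewrite Rabs_right by nra. nra.
        * rewrite Rabs_left1 by nra. nra. }
  assert (Hr_eq : p = Rpower Rad (1 / th)).
  { unfold Rad. rewrite Rpower_mult. replace (th * (1 / th)) with 1 by (field; lra).
    rewrite Rpower_1; auto. }
  assert (HR1 : Rad < 1).
  { assert (/ (INR k * (INR k + 1)) <= / 2) by (apply Rinv_le_contravar; nra). lra. }
  specialize (H Rad p z Hp0 Hr_eq ltac:(lra) HR1).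
  assert (Gz : Graph (fA al) z) by (exists (/ INR k); split; [lra|auto]).
  specialize (H Gz).
  pose proof (Rbar_le_trans _ _ _ HNge H) as Hc. simpl in Hc.
  rewrite mult_INR in Hc.
  rewrite HRp in Hc. rewrite Rpower_mult in Hc.
  set (Z := Rpower p ((th - 1) * ga)) in *.
  assert (HZ : 0 < Z) by apply Rpower_pos.
  assert (E : Rpower p (th - 1) * Y = Rpower p ((th - 1) * (g0 al th - ga)) * Z).
  { unfold Y, Z. rewrite !Rpower_mul. f_equal. unfold g0. field. lra. }
  assert (HJ8 : Rad / p / 8 <= INR J).
  { rewrite HRJ in HJ2. lra. }
  assert (HK8 : Y / 8 <= INR K) by lra.
  assert (HJ0 : 0 <= Rad / p / 8) by lra.
  assert (Rad / p / 8 * (Y / 8) <= INR J * INR K) by (apply Rmult_le_compat; lra).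
  rewrite HRp in H0.
  assert (Rpower p (th - 1) * Y >= (64 * C + 1) * Z) by nra.
  nra.
Qed.
Lemma glb_eq (E : R -> Prop) g : E g -> (forall x, E x -> g <= x) -> Glb_Rbar E = Finite g.
Proof.
  intros Hg Hlb. destruct (Glb_Rbar_correct E) as [H1 H2].
  apply Rbar_le_antisym.
  - apply H1; auto.
  - apply H2. intros x Hx. simpl. apply Hlb; auto.
Qed.

Theorem theorem1p2 :
  forall alpha : R, 0 < alpha < 1 ->
  exists f : R -> R, Holder alpha f /\
    forall theta : R, 0 < theta < alpha ->
      assouad_spec theta (Graph f) = Finite ((2 - alpha - theta) / (1 - theta)) /\
      assouad_spec_reg theta (Graph f) = Finite ((2 - alpha - theta) / (1 - theta)).
Proof.
  intros al Hal. exists (fA al). split.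
  - exists 2. split; [lra|]. intros t s Ht Hs. apply fA_holder; auto.
  - intros th Hth. change ((2 - al - th) / (1 - th)) with (g0 al th).
    assert (Hth1 : 0 < th < 1) by lra.
    assert (Hnr : forall ga, (0 < ga /\ exists C, 0 < C /\
      forall (Rad r : R) (z : pt), 0 < r -> r = Rpower Rad (1 / th) -> r < Rad -> Rad < 1 ->
        Graph (fA al) z ->
        Rbar_le (Ncov (inter (Disc z Rad) (Graph (fA al))) r) (Finite (C * Rpower (Rad / r) ga))) ->
      g0 al th <= ga).
    { intros ga [Hga [C [HC HH]]]. destruct (Rlt_le_dec ga (g0 al th)) as [Hlt|Hle]; auto.
      exfalso. apply (lower al th ga C Hal Hth Hlt HC HH). }
    split.
    + unfold assouad_spec. apply glb_eq.
      * split; [apply g0_pos; auto|]. exists 45. split; [lra|].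
        intros Rad r z Hr Heq HrR HR1 Gz. apply reg_bound; auto. lra.
      * exact Hnr.
    + unfold assouad_spec_reg. apply glb_eq.
      * split; [apply g0_pos; auto|]. exists 45. split; [lra|].
        intros Rad r z Hr Heq HrR HR1 Gz. apply reg_bound; auto.
      * intros ga [Hga [C [HC HH]]]. apply Hnr. split; auto. exists C. split; auto.
        intros Rad r z Hr Heq HrR HR1 Gz. apply HH; auto. lra.
Qed.
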